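(* Let $X$ be an infinite-dimensional complex Banach space and let $\phi:\mathcal{B}(X)\to\mathcal{B}(X)$ be a surjective map such that $K(\phi(T)\phi(S)+\phi(S)\phi(T))=K(TS+ST)$ for all $T,S\in\mathcal{B}(X)$. Then for every $R\in\mathcal{B}(X)$, $\phi(R)=0$ if and only if $R=0$.
   Context: $\mathcal{B}(X)$ denotes the algebra of all bounded linear operators on $X$. For $T\in\mathcal{B}(X)$, the analytic core $K(T)$ is the set of all $x\in X$ for which there exist $\delta>0$ and a sequence $(x_n)_{n\ge 0}\subset X$ with $x_0=x$, $Tx_{n+1}=x_n$ and $\|x_n\|\le \delta^n\|x\|$ for all $n\ge 0$. *)

(* Defs.v *)
From HB Require Import structures.
From mathcomp Require Import all_boot all_order all_algebra.
From mathcomp Require Import all_classical all_reals all_analysis.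
From mathcomp Require Import complex.
Set Implicit Arguments. Unset Strict Implicit. Unset Printing Implicit Defensive.
Import Order.TTheory GRing.Theory Num.Theory.
Import numFieldNormedType.Exports.
Local Open Scope ring_scope.
Local Open Scope classical_set_scope.

Section Defs.
Variables (R : realType).
Local Notation C := (complex R).
Variable (V : completeNormedModType C).

Definition infinite_dimensional : Prop :=
  forall (n : nat) (v : 'I_n -> V),
    exists x : V, forall c : 'I_n -> C, x <> \sum_(i < n) c i *: v i.

Record bop := Bop {
  bop_fun :> V -> V;
  bop_linear : linear bop_fun;
  bop_cont : continuous bop_fun }.

Lemma bop0_linear : linear (fun _ : V => (0 : V)).
Proof. by move=> a x y; rewrite scaler0 addr0. Qed.

Lemma bop0_cont : continuous (fun _ : V => (0 : V)).
Proof. by move=> x; apply: cvg_cst. Qed.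

Definition bop0 : bop := Bop bop0_linear bop0_cont.

Definition analytic_core (T : V -> V) : set V :=
  [set x | exists delta : R, 0 < delta /\
     exists xs : nat -> V, xs 0%N = x /\
       (forall n, T (xs n.+1) = xs n) /\
       (forall n, `|xs n| <= (delta%:C)%C ^+ n * `|x|)].

Definition jordan (T S : V -> V) : V -> V := fun x => T (S x) + S (T x).
End Defs.

(* Main.v *)
Require Import Defs.
From HB Require Import structures.
From mathcomp Require Import all_boot all_order all_algebra.
From mathcomp Require Import all_classical all_reals all_analysis.
From mathcomp Require Import complex.
From mathcomp Require Import ring lra.
Set Implicit Arguments. Unset Strict Implicit. Unset Printing Implicit Defensive.
Import Order.TTheory GRing.Theory Num.Theory.
Import numFieldNormedType.Exports.
Local Open Scope ring_scope.
Local Open Scope classical_set_scope.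
Local Open Scope complex_scope.

Section HB.
Variables (R : realType) (V : completeNormedModType (complex R)).
Definition pn (v : V) : R := complex.Re `|v|.

Lemma normE (v : V) : `|v| = (pn v)%:C.
Proof. rewrite /pn. have h : (0 : complex R) <= `|v| by []. 
 move: h; case: (`|v|) => a b; rewrite lecE /= => /andP[/eqP hb _]; apply/eqP; rewrite eq_complex /= hb !eqxx //. Qed.

Lemma p_ge0 v : 0 <= pn v.
Proof. have : (0 : complex R) <= `|v| by []. by rewrite normE lecR. Qed.

Lemma p_add v w : pn (v + w) <= pn v + pn w.
Proof. have := ler_normD v w. by rewrite !normE -rmorphD lecR. Qed.

Lemma normcR (r : R) : `|r%:C| = `|r|%:C.
Proof. by rewrite normc_def /= expr0n addr0 sqrtr_sqr. Qed.

Lemma p_scale (r : R) v : pn (r%:C *: v) = `|r| * pn v.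
Proof. have := normrZ r%:C v. rewrite !normE normcR -rmorphM. by case. Qed.

Lemma p_gt0 v : v != 0 -> 0 < pn v.
Proof. rewrite -normr_gt0 normE ltcR //. Qed.

Lemma normci : `|'i : complex R| = 1.
Proof. by rewrite normc_def /= expr0n add0r expr1n sqrtr1. Qed.

Lemma p_i v : pn ('i *: v) = pn v.
Proof. by rewrite /pn normrZ normci mul1r. Qed.

Lemma rcM (a b : R) : (a * b)%:C = a%:C * b%:C.
Proof. exact: rmorphM. Qed.

Definition rlin (u : V -> R) := forall (r : R) v1 v2, u (r%:C *: v1 + v2) = r * u v1 + u v2.

Definition good (w : V) (G : set (V * R)) :=
  [/\ (forall v a b, G (v,a) -> G (v,b) -> a = b),
      (forall r v a v' a', G (v,a) -> G (v',a') -> G (r%:C *: v + v', r*a + a')),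
      (forall v a, G (v,a) -> a <= pn v) & G (w, pn w)].

Definition PP w G := G = set0 \/ good w G.

Lemma PP_good w G z : PP w G -> G z -> good w G.
Proof. by case=> // -> . Qed.

Lemma good0 w G : good w G -> G (0, 0).
Proof.
case=> _ gC _ gw; have := gC (-1) _ _ _ _ gw gw.
by rewrite rmorphN1 scaleN1r addNr mulN1r addNr.
Qed.

Lemma goodZ w G r v a : good w G -> G (v, a) -> G (r%:C *: v, r * a).
Proof.
move=> gG h; have := good0 gG; case: gG => _ gC _ _ h0.
by have := gC r _ _ _ _ h h0; rewrite !addr0.
Qed.

Lemma goodD w G v a v' a' : good w G -> G (v, a) -> G (v', a') -> G (v + v', a + a').
Proof.
case=> _ gC _ _ h h'.
by have := gC 1 _ _ _ _ h h'; rewrite rmorph1 scale1r mul1r.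
Qed.

Lemma chainP w (F : set (set (V * R))) : F `<=` PP w -> total_on F subset ->
  PP w (\bigcup_(X in F) X).
Proof.
move=> FP Ftot.
have both : forall X Y z z', F X -> F Y -> X z -> Y z' ->
    exists Z, [/\ F Z, Z z & Z z'].
  move=> X Y z z' FX FY Xz Yz'; case: (Ftot _ _ FX FY) => [XY|YX].
    by exists Y; split => //; apply: XY.
  by exists X; split => //; apply: YX.
have [[z [X FX Xz]]|nz] := pselect (exists z, (\bigcup_(X in F) X) z); last first.
  by left; apply/seteqP; split => // z Uz; apply: nz; exists z.
right; have gX := PP_good (FP _ FX) Xz.
split.
- move=> v a b [Y FY Ya] [Y' FY' Yb].
  have [Z [FZ Za Zb]] := both _ _ _ _ FY FY' Ya Yb.
  by case: (PP_good (FP _ FZ) Za) => h _ _ _; exact: h Za Zb.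
- move=> r v a v' a' [Y FY Ya] [Y' FY' Yb].
  have [Z [FZ Za Zb]] := both _ _ _ _ FY FY' Ya Yb.
  exists Z => //; by case: (PP_good (FP _ FZ) Za) => _ h _ _; exact: h Za Zb.
- move=> v a [Y FY Ya]; by case: (PP_good (FP _ FY) Ya) => _ _ h _; exact: h Ya.
- by exists X => //; case: gX.
Qed.

Lemma scale_inv (s : R) (d : V) : s != 0 -> s%:C *: (s^-1%:C *: d) = d.
Proof. by move=> s0; rewrite scalerA -rmorphM mulfV // rmorph1 scale1r. Qed.

Lemma scale_inv2 (s : R) (d v0 : V) : s != 0 ->
  s%:C *: (s^-1%:C *: d + v0) = d + s%:C *: v0.
Proof. by move=> s0; rewrite scalerDr scale_inv. Qed.

Lemma extend w A v0 : good w A -> (forall a, ~ A (v0, a)) ->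
  exists B, A `<` B /\ good w B.
Proof.
move=> gA nA.
have [Afun Acl Adom Aw] := gA.
have key : forall d1 a1 d2 a2, A (d1,a1) -> A (d2,a2) ->
    a1 - pn (d1 - v0) <= pn (d2 + v0) - a2.
  move=> d1 a1 d2 a2 h1 h2.
  have h := Adom _ _ (goodD gA h1 h2).
  have e : d1 + d2 = (d1 - v0) + (d2 + v0) by rewrite addrA addrAC subrK.
  have := p_add (d1 - v0) (d2 + v0); rewrite -e => h'.
  have := le_trans h h'. move=> hh. lra.
pose E := [set x | exists d a, A (d,a) /\ x = a - pn (d - v0)].
have E0 : E !=set0 by exists (0 - pn (0 - v0)); exists 0, 0; split => //; exact: good0 gA.
have Eub : ubound E (pn (0 + v0) - 0).
  move=> x [d [a [hA ->]]]; exact: key hA (good0 gA).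
pose c := sup E.
have c_lo : forall d a, A (d,a) -> a - pn (d - v0) <= c.
  move=> d a hA; apply: (ub_le_sup (ex_intro _ _ Eub)); by exists d, a.
have c_hi : forall d a, A (d,a) -> c <= pn (d + v0) - a.
  move=> d a hA; apply: ge_sup => // x [d' [a' [hA' ->]]]; exact: key hA' hA.
pose B := [set z | exists d a t, A (d,a) /\ z = (d + t%:C *: v0, a + t * c)].
have AB : A `<=` B.
  move=> [d a] hA; exists d, a, 0; split => //.
  by rewrite rmorph0 scale0r addr0 mul0r addr0.
exists B; split.
  split => // BA.
  have : B (v0, c).
    exists 0, 0, 1; split; first exact: good0 gA.
    by rewrite rmorph1 scale1r add0r mul1r add0r.
  by move/BA; apply: nA.
split.
- move=> v x y [d [a [t [hA [-> ->]]]]] [d' [a' [t' [hA' [hv ->]]]]].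
  have [tt|tt] := eqVneq t t'.
    subst t'; move/addIr: hv => hd; subst d'.
    by rewrite (Afun _ _ _ hA hA').
  exfalso.
  have hv' : (t - t')%:C *: v0 = d' - d.
    rewrite rmorphB scalerBl; apply: (addrI d); rewrite addrA hv addrK addrC subrK //.
  have ts : t - t' != 0 by rewrite subr_eq0.
  have hD := goodD gA hA' (goodZ (-1) gA hA).
  have := goodZ (t - t')^-1 gA hD.
  move=> h; apply: (nA ((t - t')^-1 * (a' - a))); move: h; congr (A (_, _)).
    by rewrite ?rmorphN1 ?scaleN1r -hv' scalerA -rmorphM mulVf // rmorph1 scale1r.
  by rewrite mulN1r.
- move=> r v x v' x' [d [a [t [hA [-> ->]]]]] [d' [a' [t' [hA' [-> ->]]]]].
  exists (r%:C *: d + d'), (r * a + a'), (r * t + t'); split.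
    exact: Acl.
  congr (_, _).
    rewrite scalerDr scalerA -rmorphM rmorphD /= scalerDl.
    by rewrite addrACA.
  by rewrite mulrDr mulrDl mulrA addrACA.
- move=> v x [d [a [t [hA [-> ->]]]]].
  have [t0|t0|t0] := ltgtP t 0.
  + have nt : 0 < - t by rewrite oppr_gt0.
    have ntz : - t != 0 by rewrite gt_eqF.
    have := c_lo _ _ (goodZ (- t)^-1 gA hA).
    move=> h; have := ler_wpM2l (ltW nt) h.
    rewrite mulrBr mulrA mulfV // mul1r.
    have hp : forall Y, - t * pn Y = pn ((- t)%:C *: Y) by move=> Y; rewrite p_scale gtr0_norm.
    rewrite hp scalerBr scale_inv // rmorphN scaleNr opprK => hh; lra.
  + have tz : t != 0 by rewrite gt_eqF.
    have := c_hi _ _ (goodZ t^-1 gA hA).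
    move=> h; have := ler_wpM2l (ltW t0) h.
    rewrite mulrBr mulrA mulfV // mul1r.
    have hp : forall Y, t * pn Y = pn (t%:C *: Y) by move=> Y; rewrite p_scale gtr0_norm.
    rewrite hp scale_inv2 // => hh; lra.
  + by subst t; rewrite rmorph0 scale0r addr0 mul0r addr0; exact: Adom.
- exists w, (pn w), 0; split => //.
  by rewrite rmorph0 scale0r addr0 mul0r addr0.
Qed.

Lemma hb_real w : w != 0 ->
  exists u : V -> R, rlin u /\ (forall v, u v <= pn v) /\ u w = pn w.
Proof.
move=> w0.
have [A [PA Amax]] := Zorn_bigcup (@chainP w).
pose G0 := [set z : V * R | exists t : R, z = (t%:C *: w, t * pn w)].
have gG0 : good w G0.
  split.
  - move=> v a b [t [-> ->]] [s [hv ->]].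
    have : (t - s)%:C *: w = 0 by rewrite rmorphB scalerBl hv subrr.
    move/eqP; rewrite scaler_eq0 (negbTE w0) orbF => /eqP.
    move/(congr1 (@complex.Re R)) => /= /eqP; rewrite subr_eq0 => /eqP -> //.
  - move=> r v a v' a' [t [-> ->]] [s [-> ->]].
    exists (r * t + s); congr (_, _).
      by rewrite scalerA -rmorphM rmorphD scalerDl.
    by rewrite mulrDl mulrA.
  - move=> v a [t [-> ->]]; rewrite p_scale; apply: ler_wpM2r; first exact: p_ge0.
    exact: ler_norm.
  - by exists 1; rewrite rmorph1 scale1r mul1r.
have gA : good w A.
  case: PA => // A0; exfalso; apply: (Amax G0); last by right.
  rewrite A0; split => // h; have : G0 (w, pn w) by case: gG0.
  by move/h.
have tot : forall v, exists a, A (v, a).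
  move=> v0; apply: contrapT => nv0.
  have nA : forall a, ~ A (v0, a) by move=> a h; apply: nv0; exists a.
  have [B [AB gB]] := extend gA nA.
  by apply: (Amax B AB); right.
have [Afun Acl Adom Aw] := gA.
pose u v := xget 0 [set a | A (v, a)].
have uA : forall v, A (v, u v) by move=> v; exact: (xgetPex 0 (tot v)).
exists u; split; last split.
- move=> r v1 v2; apply: (Afun (r%:C *: v1 + v2)); first exact: uA.
  exact: Acl (uA _) (uA _).
- by move=> v; exact: Adom (uA v).
- exact: Afun (uA w) Aw.
Qed.

Lemma cplx_id (a b x y : R) :
  ((a * x + b * y)%:C - 'i * (a * y - b * x)%:C) = (a +i* b) * (x%:C - 'i * y%:C).
Proof. by apply/eqP; rewrite eq_complex /=; apply/andP; split; apply/eqP; ring. Qed.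

Lemma cplx_split (a b : R) : a +i* b = a%:C + b%:C * 'i.
Proof. by apply/eqP; rewrite eq_complex /=; apply/andP; split; apply/eqP; ring. Qed.

Lemma cplx_Re (x y : R) : complex.Re (x%:C - 'i * y%:C) = x.
Proof. rewrite /=; ring. Qed.

Lemma ii : ('i%C : complex R) * 'i = (-1)%:C.
Proof. by apply/eqP; rewrite eq_complex /=; apply/andP; split; apply/eqP; ring. Qed.

Lemma pnN v : pn (- v) = pn v.
Proof. by rewrite /pn normrN. Qed.

Lemma hb_complex (w : V) : w != 0 -> exists f : V -> complex R,
  [/\ (forall v1 v2, f (v1 + v2) = f v1 + f v2),
      (forall (al : complex R) v, f (al *: v) = al * f v),
      (forall v, `|f v| <= 2%:R * `|v|) & f w != 0].
Proof.
move=> w0; have [u [ul [ule uw]]] := hb_real w0.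
have uD : forall v1 v2, u (v1 + v2) = u v1 + u v2.
  by move=> v1 v2; have := ul 1 v1 v2; rewrite rmorph1 scale1r mul1r.
have u0 : u 0 = 0.
  by have := uD 0 0; rewrite addr0 => h; lra.
have uZ : forall r v, u (r%:C *: v) = r * u v.
  by move=> r v; have := ul r v 0; rewrite addr0 u0 addr0.
have uN : forall v, `|u v| <= pn v.
  move=> v; rewrite ler_norml ule andbT.
  have e : - v = (-1)%:C *: v by rewrite rmorphN1 scaleN1r.
  have := ule (- v); rewrite pnN e uZ mulN1r; lra.
pose f v := (u v)%:C - 'i * (u ('i *: v))%:C.
exists f; split.
- by move=> v1 v2; rewrite /f scalerDr !uD !rmorphD mulrDr addrACA opprD.
- move=> [a b] v; rewrite /f.
  have e1 : (a +i* b) *: v = a%:C *: v + b%:C *: ('i *: v).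
    by rewrite cplx_split scalerDl scalerA.
  have e2 : 'i *: ((a +i* b) *: v) = a%:C *: ('i *: v) + (- b)%:C *: v.
    rewrite e1 scalerDr !scalerA.
    by congr (_ + _); congr (_ *: v); apply/eqP; rewrite eq_complex /=; apply/andP; split; apply/eqP; ring.
  rewrite e2 e1 !uD !uZ -cplx_id; congr (_ - _ * _); congr (_%:C); ring.
- move=> v; rewrite /f; apply: le_trans (ler_normB _ _) _.
  rewrite normrM normci mul1r !normcR normE -rmorphD.
  rewrite (_ : 2 * (pn v)%:C = (2 * pn v)%:C); last by rewrite rmorphM rmorph_nat.
  rewrite lecR; have h1 := uN v; have h2 := uN ('i *: v); rewrite p_i in h2; lra.
- apply/eqP => /(congr1 (@complex.Re R)); rewrite cplx_Re uw /=.
  by move/eqP; rewrite gt_eqF // p_gt0.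
Qed.

Definition isfun (f : V -> complex R) :=
  [/\ (forall v1 v2, f (v1 + v2) = f v1 + f v2),
      (forall (al : complex R) v, f (al *: v) = al * f v) &
      exists M, 0 <= M /\ forall v, `|f v| <= M * `|v|].

Lemma hb_fun (w : V) : w != 0 -> exists f, isfun f /\ f w != 0.
Proof.
move=> w0; have [f [fD fZ fB fw]] := hb_complex w0.
by exists f; split => //; split => //; exists 2%:R; split.
Qed.

Lemma isfun_comb (a b : complex R) f1 f2 : isfun f1 -> isfun f2 ->
  isfun (fun v => a * f1 v + b * f2 v).
Proof.
move=> [D1 Z1 [M1 [M10 B1]]] [D2 Z2 [M2 [M20 B2]]]; split.
- by move=> v1 v2; rewrite D1 D2 !mulrDr addrACA.
- by move=> al v; rewrite Z1 Z2 mulrDr !mulrA (mulrC a) (mulrC b).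
- exists (`|a| * M1 + `|b| * M2); split.
    by rewrite addr_ge0 // mulr_ge0.
  move=> v; apply: le_trans (ler_normD _ _) _; rewrite mulrDl !normrM.
  by apply: lerD; rewrite -mulrA ler_wpM2l.
Qed.

Lemma lin0 (g : V -> V) : linear g -> g 0 = 0.
Proof.
move=> lg; have := lg 1 0 0; rewrite !scale1r addr0 => h.
by apply: (addrI (g 0)); rewrite addr0 -h.
Qed.

Lemma linZ (g : V -> V) a v : linear g -> g (a *: v) = a *: g v.
Proof. by move=> lg; have := lg a v 0; rewrite addr0 (lin0 lg) addr0. Qed.

Lemma linD (g : V -> V) u v : linear g -> g (u + v) = g u + g v.
Proof. by move=> lg; have := lg 1 u v; rewrite !scale1r. Qed.

Lemma r1_linear f (z : V) : isfun f -> linear (fun v => f v *: z).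
Proof. by move=> [fD fZ _] a u v; rewrite /= fD fZ scalerDl scalerA. Qed.

Lemma r1_cont f (z : V) : isfun f -> continuous (fun v => f v *: z).
Proof.
move=> [fD fZ [M [M0 fB]]] x.
have fB' : forall y, `|f x *: z - f y *: z| <= `|x - y| * (M * `|z| + 1).
  move=> y; rewrite -scalerBl.
  have -> : f x - f y = f (x - y).
    rewrite fD; have -> : - y = (-1) *: y by rewrite scaleN1r.
    by rewrite fZ mulN1r.
  rewrite normrZ (le_trans (ler_wpM2r (normr_ge0 _) (fB _))) //.
  rewrite -mulrA mulrCA; apply: ler_wpM2l => //; by rewrite lerDl.
have Mp : 0 < M * `|z| + 1 by rewrite ltr_wpDl // mulr_ge0.
apply/cvgrPdist_lt => e e0; near=> y.
rewrite (le_lt_trans (fB' y)) // -ltr_pdivlMr //.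
near: y; apply: cvgr_dist_lt => //; exact: divr_gt0.
Unshelve. all: by end_near.
Qed.

Definition r1 f (z : V) (hf : isfun f) : bop V := Bop (@r1_linear f z hf) (@r1_cont f z hf).

Lemma exists_fix (A : V -> V) x : linear A -> A x != 0 ->
  exists z f, [/\ isfun f, z != 0 & f z *: A z + f (A z) *: z = z].
Proof.
move=> lA Ax.
have x0 : x != 0 by apply: contraNneq Ax => ->; rewrite lin0.
have [g [gf gy]] := hb_fun Ax.
have [gD gZ _] := gf.
case: (pselect (exists mu, A x = mu *: x)) => [[mu ymu]|nmu].
  have mu0 : mu != 0 by apply: contraNneq Ax => mu0; rewrite ymu mu0 scale0r.
  have [h [hf hx]] := hb_fun x0.
  have [hD hZ _] := hf.
  pose c := (2%:R * mu * h x)^-1.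
  exists x, (fun v => c * h v + 0 * h v); split => //.
    exact: isfun_comb.
  rewrite ymu !mul0r !addr0 hZ scalerA -scalerDl -[RHS]scale1r; congr (_ *: _).
  by rewrite /c; field; rewrite hx mu0.
case: (eqVneq (g x) 0) => gx0.
  exists x, (fun v => (g (A x))^-1 * g v + 0 * g v); split => //.
    exact: isfun_comb.
  by rewrite gx0 !mul0r !addr0 mulr0 scale0r add0r mulVf // scale1r.
pose w := g x *: A x - g (A x) *: x.
have w0 : w != 0.
  apply/eqP => hw; apply: nmu; exists (g (A x) / g x).
  apply: (scalerI gx0); rewrite scalerA mulrCA mulfV // mulr1.
  by apply/eqP; rewrite -subr_eq0 -/w hw.
have [h [hf hw]] := hb_fun w0.
have [hD hZ _] := hf.
have hN : forall v, h (- v) = - h v.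
  by move=> v; have := hZ (-1) v; rewrite scaleN1r mulN1r.
pose d := h x * g (A x) - g x * h (A x).
have hwd : h w = - d by rewrite /w hD hN !hZ /d; ring.
have d0 : d != 0 by apply: contraNneq hw => d0; rewrite hwd d0 oppr0.
exists x, (fun v => (h x / d) * g v + (- g x / d) * h v); split => //.
  exact: isfun_comb.
have -> : h x / d * g x + - g x / d * h x = 0 by ring.
rewrite scale0r add0r -[RHS]scale1r; congr (_ *: _).
rewrite /d; field; by rewrite -/d.
Qed.

Lemma bop_ext (A : bop V) : (forall x, A x = 0) -> A = @bop0 R V.
Proof.
case: A => fA lA cA /= hA.
have e : fA = (fun _ => 0) by apply: funext.
subst fA; congr Bop; exact: Prop_irrelevance.
Qed.

Lemma K_fix (g : V -> V) z : g z = z -> analytic_core g z.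
Proof.
move=> gz; exists 1; split => //; exists (fun _ => z); split => //; split => // n.
by rewrite rmorph1 expr1n mul1r.
Qed.

Lemma K_zero (g : V -> V) : (forall x, g x = 0) -> forall x, analytic_core g x -> x = 0.
Proof. by move=> g0 x [d [d0 [xs [xs0 [hxs _]]]]]; rewrite -xs0 -(hxs 0) g0. Qed.

Lemma KL (A : bop V) :
  (forall T : bop V, forall x, analytic_core (jordan A T) x -> x = 0) -> A = @bop0 R V.
Proof.
move=> h; apply: bop_ext => x; apply: contrapT => /eqP Ax.
have [z [f [hf z0 e]]] := exists_fix (bop_linear A) Ax.
have := h (@r1 f z hf) z; rewrite /jordan /=.
move=> hh; move/eqP: z0; apply; apply: hh; apply: K_fix.
by rewrite (@linZ A (f z) z (bop_linear A)).
Qed.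

Lemma jordanC (T S : V -> V) : jordan T S = jordan S T.
Proof. by apply: funext => x; rewrite /jordan addrC. Qed.
End HB.

Theorem mainTheorem5 (R : realType) (V : completeNormedModType (complex R))
  (phi : bop V -> bop V) :
  infinite_dimensional V ->
  (forall T : bop V, exists S : bop V, phi S = T) ->
  (forall T S : bop V,
     analytic_core (jordan (phi T) (phi S)) = analytic_core (jordan T S)) ->
  forall Rop : bop V, phi Rop = bop0 V <-> Rop = bop0 V.
Proof.
move=> _ surj hK Rop; split.
  move=> hR; apply: KL => T x; rewrite jordanC -hK hR.
  apply: K_zero => y; rewrite /jordan /= addr0; exact: lin0 (bop_linear _).
move=> ->; apply: KL => T x.
have [S <-] := surj T; rewrite hK.
apply: K_zero => y; rewrite /jordan /= add0r; exact: lin0 (bop_linear _).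
Qed.
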